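(* Let $\ell\geq2$ and $w\geq 0$. For every $d\geq0$, $\prod_{\lambda\in\mathrm{Par}(d)}\vartheta_\ell(\lambda)=\ell^{\,l(d)}$. Consequently $$\prod_{d=0}^{w}\ \prod_{\lambda\in\mathrm{Par}(d)}\vartheta_\ell(\lambda)^{k(\ell-2,w-d)}=\ell^{\,b_\ell(w)},$$ where $b_\ell(w)$ is defined by $\sum_{w\geq0}b_\ell(w)q^w=P(q)^{\ell-2}L(q)$.
   Context: $\mathrm{Par}(d)$ is the set of partitions of $d$, $l(\lambda)$ the number of parts, $m_n(\lambda)$ the multiplicity of part $n$, $l(d)=\sum_{\lambda\in\mathrm{Par}(d)}l(\lambda)$, and $L(q)=\sum_{d\geq0}l(d)q^d$, $P(q)=\prod_{i\geq1}(1-q^i)^{-1}$. $k(m,j)$ is the number of $m$-multipartitions of $j$ (tuples of $m$ partitions with total size $j$), i.e. the coefficient of $q^j$ in $P(q)^m$ (with $k(0,j)=\delta_{j0}$). For a prime $p$, $\nu_p$ is the $p$-adic valuation and $d_p(a)=\sum_{j\geq1}\lfloor a/p^j\rfloor$. For $r\geq1$, $\vartheta_{p^r}(\lambda)=\prod_{n\geq1,\ 0\leq\nu_p(n)<r}p^{(r-\nu_p(n))m_n(\lambda)+d_p(m_n(\lambda))}$. If $\ell=\prod_{i=1}^s p_i^{r_i}$ is the prime factorization, $\vartheta_\ell(\lambda)=\prod_{i=1}^s\vartheta_{p_i^{r_i}}(\lambda)$. *)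

(* Defs.v *)
From mathcomp Require Import all_boot.
Set Implicit Arguments. Unset Strict Implicit. Unset Printing Implicit Defensive.

(* A partition lambda of d is encoded by its multiplicity vector:
   lambda : {ffun 'I_d -> 'I_d.+1}, where lambda i = m_{i+1}(lambda),
   the multiplicity of the part i+1 (parts of a partition of d lie in 1..d,
   and every multiplicity is at most d).  This is a bijection with Par(d). *)
Definition parcode (d : nat) := {ffun 'I_d -> 'I_d.+1}.

Definition is_par (d : nat) (lam : parcode d) : bool :=
  \sum_(i < d) i.+1 * lam i == d.

Definition mult (d : nat) (lam : parcode d) (n : nat) : nat :=
  match n with
  | 0 => 0
  | n'.+1 => if @insub nat (fun k => k < d) 'I_d n' is Some i then val (lam i) else 0
  end.

Definition nparts (d : nat) (lam : parcode d) : nat := \sum_(i < d) lam i.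

Definition ltot (d : nat) : nat := \sum_(lam : parcode d | is_par lam) nparts lam.

Definition npar (d : nat) : nat := #|[pred lam : parcode d | is_par lam]|.

(* k(m, j): coefficient of q^j in P(q)^m (number of m-multipartitions of j) *)
Fixpoint kmp (m j : nat) : nat :=
  match m with
  | 0 => (j == 0)
  | m'.+1 => \sum_(i < j.+1) npar i * kmp m' (j - i)
  end.

(* d_p(a) = sum_{j >= 1} floor(a / p^j); for p >= 2 terms with j > a vanish *)
Definition dp (p a : nat) : nat := \sum_(1 <= j < a.+1) a %/ p ^ j.

(* vartheta_{p^r}(lambda) = prod_{n >= 1, nu_p(n) < r} p^((r - nu_p(n)) m_n + d_p(m_n));
   factors with n > d have m_n = 0 and equal 1, so n ranges over 1..d. *)
Definition vartheta_pp (d : nat) (p r : nat) (lam : parcode d) : nat :=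
  \prod_(1 <= n < d.+1 | logn p n < r)
     p ^ ((r - logn p n) * mult lam n + dp p (mult lam n)).

Definition vartheta (d : nat) (ell : nat) (lam : parcode d) : nat :=
  \prod_(p <- primes ell) vartheta_pp p (logn p ell) lam.

(* b_ell(w): coefficient of q^w in P(q)^(ell-2) L(q) *)
Definition bcoef (ell w : nat) : nat :=
  \sum_(d < w.+1) kmp (ell - 2) (w - d) * ltot d.

(* Main.v *)
Require Import Defs.
From mathcomp Require Import all_boot.
From Stdlib Require Import Lia.
Set Implicit Arguments. Unset Strict Implicit. Unset Printing Implicit Defensive.

Ltac nlia := repeat match goal with H : is_true (_ <= _) |- _ => apply (elimT leP) in H end;
  repeat match goal with H : is_true (_ < _) |- _ => apply (elimT ltP) in H end;
  try apply/leP; try apply/ltP;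
  change addn with Nat.add in *; change muln with Nat.mul in *; change subn with Nat.sub in *; lia.

Ltac nnia := repeat match goal with H : is_true (_ <= _) |- _ => apply (elimT leP) in H end;
  repeat match goal with H : is_true (_ < _) |- _ => apply (elimT ltP) in H end;
  try apply/leP; try apply/ltP;
  change addn with Nat.add in *; change muln with Nat.mul in *; change subn with Nat.sub in *; nia.

Lemma arith1 N q t x y d : 0 < N -> 0 < q -> t*q <= x -> N*x + N*q*y <= d -> y + t <= d.
Proof.
move=> h0 hq h1 h2.
have h3 : N*(t*q) <= N*x by rewrite leq_mul.
have h4 : y + t <= N*q*(y+t) by rewrite leq_pmull // muln_gt0 h0.
nnia.
Qed.
Lemma arith2 N q t x y d : 0 < N -> t <= y -> N*x + N*q*y <= d -> x + t*q <= d.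
Proof.
move=> h0 h1 h2.
have h3 : N*q*t <= N*q*y by rewrite leq_mul.
have h4 : x + t*q <= N*(x + t*q) by rewrite leq_pmull.
nnia.
Qed.

Lemma count_le k D : \sum_(1 <= t < D.+1) (t <= k) = minn k D.
Proof.
elim: D => [|D IH]; first by rewrite big_geq // minn0.
rewrite big_nat_recr //= IH.
case: (leqP k D) => h.
  rewrite addn0; apply/esym/minn_idPl; exact: leq_trans h (leqnSn _).
rewrite addn1; apply/esym/minn_idPr; exact: h.
Qed.

Lemma count2 a r D :
  \sum_(1 <= j < D.+1) ((j <= a) && (a < r + j)) = a - (a - D) - (a - r).
Proof.
elim: D => [|D IH]; first by rewrite big_geq // subn0 subnn sub0n.
rewrite big_nat_recr //= IH.
case: (boolP ((D.+1 <= a) && (a < r + D.+1))) => /= [/andP[h1 h2]|]; first nlia.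
rewrite negb_and -!ltnNge => /orP[h|h]; nlia.
Qed.

Lemma sum_mult q (g : nat -> nat) D : 0 < q ->
  \sum_(1 <= N < D.+1 | q %| N) g N = \sum_(1 <= n < (D %/ q).+1) g (n * q).
Proof.
move=> q0; elim: D => [|D IH]; first by rewrite div0n !big_geq.
rewrite big_mkcond big_nat_recr //= -big_mkcond IH.
case: (boolP (q %| D.+1)) => h /=.
  have e := divnS D q0; rewrite h add1n in e.
  by rewrite e [RHS]big_nat_recr // -e divnK.
by rewrite addn0 divnS // (negbTE h).
Qed.

Section Par.
Variable d : nat.
Implicit Types lam : parcode d.

Lemma multE lam i (hi : i < d) : mult lam i.+1 = lam (Ordinal hi).
Proof. by rewrite /= insubT. Qed.

Lemma mult_big lam n : d < n -> mult lam n = 0.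
Proof. by case: n => // n hn; rewrite /= insubF // ltnNge -ltnS hn. Qed.

Lemma mult_le lam n : mult lam n <= d.
Proof.
case: n => //= n; case: insubP => [i _ _|//]; by rewrite -ltnS ltn_ord.
Qed.

Lemma sum_shift (F : nat -> nat) : \sum_(1 <= n < d.+1) F n = \sum_(i < d) F i.+1.
Proof. by rewrite big_add1 /= big_mkord. Qed.

Lemma par_sum lam : is_par lam -> \sum_(1 <= n < d.+1) n * mult lam n = d.
Proof.
move/eqP=> h; rewrite sum_shift -[RHS]h; apply: eq_bigr => i _.
by rewrite multE; congr (_ * nat_of_ord (lam _)); apply: val_inj.
Qed.

Lemma nparts_eq lam : nparts lam = \sum_(1 <= n < d.+1) mult lam n.
Proof.
rewrite sum_shift; apply: eq_bigr => i _.
by rewrite multE; congr (nat_of_ord (lam _)); apply: val_inj.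
Qed.

Lemma two_terms lam (a b : 'I_d) : is_par lam -> a != b ->
  a.+1 * lam a + b.+1 * lam b <= d.
Proof.
move=> /eqP h ab; rewrite -[X in _ <= X]h (bigD1 a) //= (bigD1 b) /=; last by rewrite eq_sym.
by rewrite addnA leq_addr.
Qed.

Lemma one_term lam (a : 'I_d) : is_par lam -> a.+1 * lam a <= d.
Proof.
move=> /eqP h; rewrite -[X in _ <= X]h (bigD1 a) //=.
by rewrite leq_addr.
Qed.

Lemma multO lam (i : 'I_d) : mult lam i.+1 = lam i.
Proof. by rewrite multE; congr (nat_of_ord (lam _)); apply: val_inj. Qed.

Lemma card_shift n q t : 0 < n -> 1 < q -> 0 < t ->
  #|[set lam : parcode d | is_par lam && (t * q <= mult lam n)]| =
  #|[set lam : parcode d | is_par lam && (t <= mult lam (n * q))]|.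
Proof.
move=> n0 q1 t0; have q0 : 0 < q by apply: ltnW.
case: (ltnP d (n*q)) => hnq.
  have -> : [set lam : parcode d | is_par lam && (t <= mult lam (n * q))] = set0.
    by apply/setP => lam; rewrite !inE mult_big // leqn0 (negbTE (lt0n_neq0 t0)) andbF.
  have -> : [set lam : parcode d | is_par lam && (t * q <= mult lam n)] = set0.
    apply/setP => lam; rewrite !inE; apply/negbTE/negP => /andP[hp hm].
    case: (ltnP d n) => hn; first by move: hm; rewrite mult_big // leqn0 muln_eq0 (negbTE (lt0n_neq0 t0)) (negbTE (lt0n_neq0 q0)).
    have hi : n.-1 < d by rewrite prednK.
    move: hm; rewrite -(prednK n0) (multE _ hi) => hm.
    have := @one_term lam (Ordinal hi) hp; rewrite /= => h1.
    have h2 : n.-1.+1 * (t * q) <= n.-1.+1 * lam (Ordinal hi) by rewrite leq_mul.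
    move: hnq; rewrite -(prednK n0) => hnq.
    have h3 : n.-1.+1 * q <= n.-1.+1 * (t*q) by rewrite leq_mul // leq_pmull.
    by move: (leq_trans h3 (leq_trans h2 h1)); rewrite leqNgt hnq.
  by [].
have nq0 : 0 < n * q by rewrite muln_gt0 n0.
have hnn : n <= n * q by rewrite leq_pmulr.
have ha : n.-1 < d by rewrite (ltn_predK n0) (leq_trans hnn hnq).
have hb : (n*q).-1 < d by rewrite (ltn_predK nq0).
pose a : 'I_d := Ordinal ha. pose b : 'I_d := Ordinal hb.
have ea : a.+1 = n by rewrite /= (ltn_predK n0).
have eb : b.+1 = n * q by rewrite /= (ltn_predK nq0).
have ab : a != b.
  apply/negP => /eqP/(congr1 (fun i : 'I_d => i.+1)); rewrite ea eb => e.
  by move: (ltn_Pmulr q1 n0); rewrite -e ltnn.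
pose f (lam : parcode d) : parcode d := [ffun i => inord (if i == a then lam i - t*q else if i == b then lam i + t else lam i)].
pose g (lam : parcode d) : parcode d := [ffun i => inord (if i == a then lam i + t*q else if i == b then lam i - t else lam i)].
pose A := [set lam : parcode d | is_par lam && (t * q <= lam a)].
pose B := [set lam : parcode d | is_par lam && (t <= lam b)].
have -> : [set lam : parcode d | is_par lam && (t * q <= mult lam n)] = A.
  by apply/setP => lam; rewrite !inE -ea multO.
have -> : [set lam : parcode d | is_par lam && (t <= mult lam (n * q))] = B.
  by apply/setP => lam; rewrite !inE -eb multO.
have ba : b != a by rewrite eq_sym.
have fE lam i : lam \in A -> (f lam i : nat) = (if i == a then lam i - t*q else if i == b then lam i + t else lam i).
  rewrite inE => /andP[hp hm]; rewrite ffunE inordK //.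
  case: ifP => [_|_]; first by rewrite ltnS (leq_trans (leq_subr _ _)) // -ltnS.
  case: ifP => [/eqP ->|_]; last by [].
  rewrite ltnS; apply: (arith1 (N:=n) (q:=q) (x:=lam a)) => //.
  by rewrite -{1}ea -eb two_terms.
have gE lam i : lam \in B -> (g lam i : nat) = (if i == a then lam i + t*q else if i == b then lam i - t else lam i).
  rewrite inE => /andP[hp hm]; rewrite ffunE inordK //.
  case: ifP => [/eqP ->|_].
    rewrite ltnS; apply: (arith2 (N:=n) (q:=q) (y:=lam b)) => //.
    by rewrite -{1}ea -eb two_terms.
  case: ifP => [_|_]; last by [].
  by rewrite ltnS (leq_trans (leq_subr _ _)) // -ltnS.
have split3 (F : 'I_d -> nat) : \sum_(i < d) F i = F a + (F b + \sum_(i < d | (i != a) && (i != b)) F i).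
  rewrite (bigD1 a) //= (bigD1 b) /=; last by rewrite ba.
  by congr (_ + (_ + _)); apply: eq_bigl => i; rewrite andbC.
have fA lam : lam \in A -> f lam \in B.
  move=> hA; have := hA; rewrite !inE => /andP[/eqP hp hm].
  rewrite fE // eqxx (negbTE ba) leq_addl andbT.
  rewrite /is_par split3 -[X in _ == X]hp split3 !fE // eqxx (negbTE ba) eqxx ea eb.
  rewrite (eq_bigr (fun i : 'I_d => i.+1 * lam i)); last first.
    by move=> i /andP[/negbTE ia /negbTE ib]; rewrite fE // ia ib.
  apply/eqP; set R := \sum_(i < d | _) _.
  move: hm; set x := nat_of_ord (lam a); set y := nat_of_ord (lam b) => hm.
  nnia.
have gB lam : lam \in B -> g lam \in A.
  move=> hB; have := hB; rewrite !inE => /andP[/eqP hp hm].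
  rewrite gE // eqxx leq_addl andbT.
  rewrite /is_par split3 -[X in _ == X]hp split3 !gE // eqxx (negbTE ba) eqxx ea eb.
  rewrite (eq_bigr (fun i : 'I_d => i.+1 * lam i)); last first.
    by move=> i /andP[/negbTE ia /negbTE ib]; rewrite gE // ia ib.
  apply/eqP; set R := \sum_(i < d | _) _.
  move: hm; set x := nat_of_ord (lam a); set y := nat_of_ord (lam b) => hm.
  nnia.
have gf lam : lam \in A -> g (f lam) = lam.
  move=> hA; have := hA; rewrite inE => /andP[_ hm].
  apply/ffunP => i; apply/val_inj => /=; rewrite gE ?fA // !fE //.
  case: (eqVneq i a) => [->|ia]; first by rewrite ?eqxx subnK.
  rewrite ?(negbTE ia); case: (eqVneq i b) => [->|ib]; first by rewrite ?eqxx ?(negbTE ba) addnK.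
  by rewrite ?(negbTE ib).
have fg lam : lam \in B -> f (g lam) = lam.
  move=> hB; have := hB; rewrite inE => /andP[_ hm].
  apply/ffunP => i; apply/val_inj => /=; rewrite fE ?gB // !gE //.
  case: (eqVneq i a) => [->|ia]; first by rewrite ?eqxx ?(negbTE ba) addnK.
  rewrite ?(negbTE ia); case: (eqVneq i b) => [->|ib]; first by rewrite ?eqxx subnK.
  by rewrite ?(negbTE ib).
have -> : B = f @: A.
  apply/setP => y; apply/idP/imsetP => [hy|[x hx ->]]; last exact: fA.
  by exists (g y); [exact: gB | rewrite fg].
apply/esym/card_in_imset => x y hx hy e.
by rewrite -(gf x hx) e gf.
Qed.
Lemma sum_card (P Q : pred (parcode d)) :
  \sum_(x | P x) (Q x : nat) = #|[set x | P x && Q x]|.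
Proof.
rewrite (eq_bigr (fun x => if Q x then 1 else 0)); last by move=> x _; case: (Q x).
by rewrite -big_mkcondr -sum1_card; apply: eq_bigl => x; rewrite inE.
Qed.

Lemma sum_div n q : 0 < n -> 1 < q ->
  \sum_(lam : parcode d | is_par lam) mult lam n %/ q =
  \sum_(lam : parcode d | is_par lam) mult lam (n * q).
Proof.
move=> n0 q1; have q0 : 0 < q by apply: ltnW.
have E1 lam : mult lam n %/ q = \sum_(1 <= t < d.+1) (t * q <= mult lam n).
  rewrite [RHS](eq_bigr (fun t => nat_of_bool (t <= mult lam n %/ q))) => [|t _]; last by rewrite leq_divRL.
  rewrite count_le; apply/esym/minn_idPl; exact: leq_trans (leq_div _ _) (mult_le _ _).
have E2 lam : mult lam (n * q) = \sum_(1 <= t < d.+1) (t <= mult lam (n * q)).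
  by rewrite count_le; apply/esym/minn_idPl; exact: mult_le.
rewrite (eq_bigr _ (fun lam _ => E1 lam)) (eq_bigr _ (fun lam _ => E2 lam)).
rewrite exchange_big [RHS]exchange_big /=.
apply: eq_big_nat => t /andP[t1 _].
by rewrite !sum_card card_shift.
Qed.

Definition S N := \sum_(lam : parcode d | is_par lam) mult lam N.

Lemma S_big N : d < N -> S N = 0.
Proof. by move=> h; apply: big1 => lam _; rewrite mult_big. Qed.

Lemma dp_ext p m : 1 < p -> m <= d -> dp p m = \sum_(1 <= j < d.+1) m %/ p ^ j.
Proof.
move=> p1 hm; rewrite /dp [RHS](big_cat_nat _ (n:=m.+1)) //= ?ltnS //.
rewrite [X in _ = _ + X]big_nat_cond [X in _ = _ + X]big1 ?addn0 // => j /andP[/andP[hj _] _].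
by apply: divn_small; exact: ltn_trans hj (ltn_expl _ p1).
Qed.

Lemma Fd p n : prime p -> 0 < n ->
  \sum_(lam : parcode d | is_par lam) dp p (mult lam n) = \sum_(1 <= j < d.+1) S (n * p ^ j).
Proof.
move=> pp n0.
rewrite (eq_bigr _ (fun lam _ => dp_ext (prime_gt1 pp) (mult_le lam n))) exchange_big /=.
apply: eq_big_nat => j /andP[j1 _]; rewrite sum_div //.
exact: leq_ltn_trans j1 (ltn_expl _ (prime_gt1 pp)).
Qed.

Lemma fixj p r j : prime p -> 0 < j ->
  \sum_(1 <= n < d.+1 | logn p n < r) S (n * p ^ j) =
  \sum_(1 <= N < d.+1 | p ^ j %| N) (if logn p N < r + j then S N else 0).
Proof.
move=> pp j0; have q0 : 0 < p ^ j by rewrite expn_gt0 prime_gt0.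
rewrite sum_mult // big_mkcond /=.
rewrite (big_cat_nat _ (n := (d %/ p ^ j).+1)) //= ?ltnS ?leq_div //.
rewrite [X in _ + X = _]big_nat_cond [X in _ + X = _]big1 ?addn0.
  apply: eq_big_nat => n /andP[n1 _].
  rewrite lognM // lognX (logn_prime p pp) eqxx muln1 ltn_add2r.
  by case: ifP.
move=> n /andP[/andP[hn _] _]; rewrite S_big; first by case: ifP.
by rewrite ltnNge -leq_divRL // -ltnNge.
Qed.

Lemma key p r : prime p ->
  \sum_(1 <= n < d.+1 | logn p n < r) \sum_(lam : parcode d | is_par lam) dp p (mult lam n) =
  \sum_(1 <= N < d.+1) minn (logn p N) r * S N.
Proof.
move=> pp.
transitivity (\sum_(1 <= n < d.+1 | logn p n < r) \sum_(1 <= j < d.+1) S (n * p ^ j)).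
  rewrite [LHS]big_mkcond [RHS]big_mkcond /=; apply: eq_big_nat => n /andP[n1 _]; by rewrite Fd.
rewrite exchange_big /=.
transitivity (\sum_(1 <= j < d.+1) \sum_(1 <= N < d.+1)
   (if (p ^ j %| N) && (logn p N < r + j) then S N else 0)).
  apply: eq_big_nat => j /andP[j1 _]; rewrite fixj // big_mkcond /=.
  by apply: eq_bigr => N _; case: (p ^ j %| N).
rewrite exchange_big /=; apply: eq_big_nat => N /andP[N1 hN].
transitivity (\sum_(1 <= j < d.+1) ((j <= logn p N) && (logn p N < r + j)) * S N).
  apply: eq_big_nat => j _; rewrite pfactor_dvdn //.
  by case: (_ && _); rewrite ?mul1n ?mul0n.
rewrite -big_distrl /= count2; congr (_ * _).
have ha : logn p N < N.
  apply: leq_trans (ltn_expl _ (prime_gt1 pp)) _.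
  exact: dvdn_leq N1 (pfactor_dvdnn p N).
have hd : logn p N <= d by rewrite -ltnS; exact: leq_trans ha (ltnW hN).
rewrite minnE; move: hd; set a := logn p N => hd; nlia.
Qed.

Lemma prod_pp p r : prime p ->
  \prod_(lam : parcode d | is_par lam) vartheta_pp p r lam = p ^ (r * ltot d).
Proof.
move=> pp.
have E lam : vartheta_pp p r lam = p ^ (\sum_(1 <= n < d.+1 | logn p n < r)
   ((r - logn p n) * mult lam n + dp p (mult lam n))) by rewrite expn_sum.
rewrite (eq_bigr _ (fun lam _ => E lam)) -expn_sum; congr (p ^ _).
under eq_bigr => lam _ do rewrite big_split.
rewrite big_split /= [X in _ + X]exchange_big /= key //.
rewrite [X in _ + X](eq_bigr (fun N => \sum_(lam : parcode d | is_par lam) minn (logn p N) r * mult lam N)); last first.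
  by move=> N _; rewrite /S big_distrr.
rewrite [X in _ + X]exchange_big /= -big_split /= /ltot big_distrr /=.
apply: eq_bigr => lam _; rewrite nparts_eq big_distrr /=.
rewrite big_mkcond -big_split /=; apply: eq_bigr => n _.
case: ltnP => h.
  by rewrite -mulnDl subnK // ltnW.
by rewrite add0n.
Qed.

End Par.

Lemma prod_expn (I : Type) (r : seq I) (P : pred I) (F : I -> nat) k :
  \prod_(i <- r | P i) F i ^ k = (\prod_(i <- r | P i) F i) ^ k.
Proof. by rewrite (big_morph (fun x => x ^ k) (fun a b => expnMn a b k) (exp1n k)). Qed.

Theorem mainTheorem6 (ell w : nat) (hell : 2 <= ell) :
  (forall d : nat,
     \prod_(lam : parcode d | is_par lam) vartheta ell lam = ell ^ ltot d) /\
  \prod_(d < w.+1) \prod_(lam : parcode d | is_par lam)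
     vartheta ell lam ^ kmp (ell - 2) (w - d) = ell ^ bcoef ell w.
Proof.
have part1 : forall d : nat,
    \prod_(lam : parcode d | is_par lam) vartheta ell lam = ell ^ ltot d.
  move=> d; rewrite /vartheta exchange_big /=.
  rewrite big_seq (eq_bigr (fun p => (p ^ logn p ell) ^ ltot d)); last first.
    by move=> p; rewrite mem_primes => /and3P[pp _ _]; rewrite prod_pp // expnM.
  rewrite -big_seq prod_expn; congr (_ ^ _).
  have e := @prod_prime_decomp ell (ltnW hell).
  by rewrite prime_decompE big_map /= in e.
split=> //.
rewrite /bcoef expn_sum; apply: eq_bigr => d _.
by rewrite prod_expn part1 -expnM mulnC.
Qed.
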